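(* Let $S$ be a non-empty finite reverse-factor-free set of strings of total length $n$, and let $k_{\min}$ be the length of a shortest string that contains, for every $s\in S$, $s$ or $s^R$ as a factor. Let $w$ be an output of the algorithm Greedy-R on $S$ (for any way of breaking ties). Then $$n-|w|\;\ge\;\tfrac12\,(n-k_{\min}),$$ i.e., Greedy-R has compression ratio $\tfrac12$.
   Context: For strings $x,y$, $\mathit{ov}(x,y)$ is the length of the longest suffix of $x$ that is also a prefix of $y$; $\mathrm{pref}(x,y)$ is $x$ with its suffix of length $\mathit{ov}(x,y)$ removed, and $x\otimes y=\mathrm{pref}(x,y)\,y$. $x^R$ denotes the reversal of $x$. For a set $X$ of strings, $X^R=\{x^R: x\in X\}$ and $\widetilde{X}=X\cup X^R$. A set $X$ is reverse-factor-free if there are no distinct $x,y\in X$ such that $x$ is a factor of $y$ or of $y^R$. The procedure Make-Reverse-Factor-Free$(X)$ repeatedly removes from the current set a string $x$ for which some other string $y\neq x$ of the current set has $x$ as a factor of $y$ or of $y^R$, until no such string remains (on a reverse-factor-free set it does nothing). Algorithm Greedy-R$(S)$: first set $S:=$ Make-Reverse-Factor-Free$(S)$. Then, while $|S|>1$: among all pairs $(u,v)$ with $u,v\in\widetilde{S}$ and $u\notin\{v,v^R\}$, choose one with maximal $\mathit{ov}(u,v)$ (ties broken arbitrarily); set $S:=S\cup\{u\otimes v\}$ and then remove from $S$ all of $u,v,u^R,v^R$ that belong to $S$. Return the only element of $S$. *)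

(* Defs.v *)
From mathcomp Require Import all_boot all_order all_algebra.
Set Implicit Arguments. Unset Strict Implicit. Unset Printing Implicit Defensive.

Section Strings.
Variable T : eqType.
Implicit Types (x y u v : seq T) (S : seq (seq T)).

(* ov x y : length of the longest suffix of x that is also a prefix of y
   (the suffix may be all of x). *)
Definition ov x y : nat :=
  \max_(k < (size x).+1 | prefix (drop (size x - k) x) y) k.

Definition pref x y : seq T := take (size x - ov x y) x.

Definition merge x y : seq T := pref x y ++ y.

(* A finite set of strings is represented by a duplicate-free list;
   S~ = S u S^R. *)
Definition tilde S : seq (seq T) := S ++ map rev S.

Definition rff S : Prop :=
  forall x y, x \in S -> y \in S -> x != y -> ~~ infix x y && ~~ infix x (rev y).

Definition total_length S : nat := \sum_(s <- S) size s.

Definition rsuperstring S w : Prop :=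
  forall s, s \in S -> infix s w || infix (rev s) w.

Definition is_kmin S k : Prop :=
  (exists w, rsuperstring S w /\ size w = k) /\
  (forall w, rsuperstring S w -> k <= size w).

Definition removable S x : Prop :=
  x \in S /\ exists y, [/\ y \in S, y != x & infix x y || infix x (rev y)].

Definition mrff_step S S' : Prop :=
  exists x, removable S x /\ uniq S' /\ S' =i [pred z | (z \in S) && (z != x)].

Inductive mrff : seq (seq T) -> seq (seq T) -> Prop :=
| mrff_stop S : (forall x, ~ removable S x) -> mrff S S
| mrff_more S S' S'' : mrff_step S S' -> mrff S' S'' -> mrff S S''.

Definition admissible S u v : Prop :=
  [/\ u \in tilde S, v \in tilde S, u != v & u != rev v].

(* One iteration of the while loop of Greedy-R, with arbitrary tie-breaking. *)
Definition greedy_step S S' : Prop :=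
  exists u v, [/\ admissible S u v,
    (forall u' v', admissible S u' v' -> ov u' v' <= ov u v),
    uniq S' &
    S' =i [pred z | ((z \in S) || (z == merge u v)) &&
                    (z \notin [:: u; v; rev u; rev v])]].

Inductive greedy_loop : seq (seq T) -> seq T -> Prop :=
| gl_done w : greedy_loop [:: w] w
| gl_step S S' w : 1 < size S -> greedy_step S S' -> greedy_loop S' w ->
                   greedy_loop S w.

Definition greedyR_output S w : Prop :=
  exists S0, mrff S S0 /\ greedy_loop S0 w.

End Strings.

(* Main.v *)
Require Import Defs.
From mathcomp Require Import all_boot all_order all_algebra zify lra.
Set Implicit Arguments. Unset Strict Implicit. Unset Printing Implicit Defensive.
Local Notation merge := Defs.merge.

Section A.
Variable A : eqType.
Implicit Types (x y u v a b c d p q r s m : seq A).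

Lemma ovP x y : exists x1 o y1, [/\ x = x1 ++ o, y = o ++ y1 & size o = ov x y].
Proof.
rewrite /ov.
have P0 : (fun k : 'I_(size x).+1 => prefix (drop (size x - k) x) y) ord0.
  by rewrite /= subn0 drop_size prefix0s.
rewrite (bigmax_eq_arg ord0 P0).
case: arg_maxnP => //= i Pi _.
case/prefixP: Pi => y1 Ey.
exists (take (size x - i) x), (drop (size x - i) x), y1; split => //.
  by rewrite cat_take_drop.
rewrite size_drop; have := ltn_ord i; lia.
Qed.

Lemma ov_max x y x1 o y1 : x = x1 ++ o -> y = o ++ y1 -> size o <= ov x y.
Proof.
move=> Ex Ey; rewrite /ov.
have lt : size o < (size x).+1 by rewrite Ex size_cat; lia.
apply: (leq_trans _ (leq_bigmax_cond (Ordinal lt) _)) => //=.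
rewrite Ex drop_cat size_cat.
have -> : size x1 + size o - size o = size x1 by lia.
by rewrite ltnn subnn drop0 Ey prefix_prefix.
Qed.

Lemma ov_le_l x y : ov x y <= size x.
Proof. by have [x1 [o [y1 [-> _ <-]]]] := ovP x y; rewrite size_cat leq_addl. Qed.

Lemma ov_le_r x y : ov x y <= size y.
Proof. by have [x1 [o [y1 [_ -> <-]]]] := ovP x y; rewrite size_cat leq_addr. Qed.

Lemma ov_rev x y : ov (rev y) (rev x) = ov x y.
Proof.
apply/eqP; rewrite eqn_leq; apply/andP; split.
  have [y1 [o [x1 [Ey Ex <-]]]] := ovP (rev y) (rev x).
  rewrite -size_rev; apply: (@ov_max _ _ (rev x1) (rev o) (rev y1)).
    by rewrite -rev_cat -Ex revK.
  by rewrite -rev_cat -Ey revK.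
have [x1 [o [y1 [Ex Ey <-]]]] := ovP x y.
rewrite -size_rev; apply: (@ov_max _ _ (rev y1) (rev o) (rev x1)).
  by rewrite Ey rev_cat.
by rewrite Ex rev_cat.
Qed.

Lemma merge_spec u v : exists u1 o v1,
  [/\ u = u1 ++ o, v = o ++ v1, size o = ov u v & merge u v = u1 ++ o ++ v1].
Proof.
have [u1 [o [v1 [Eu Ev So]]]] := ovP u v.
exists u1, o, v1; split => //.
by rewrite /merge /pref -So Eu size_cat addnK take_size_cat // Ev.
Qed.

Lemma size_mg u v : size (merge u v) = size u + size v - ov u v.
Proof.
have [u1 [o [v1 [Eu Ev So ->]]]] := merge_spec u v.
rewrite -So Eu Ev !size_cat; lia.
Qed.

Lemma cat_inj a b c d : a ++ b = c ++ d -> size a = size c -> a = c /\ b = d.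
Proof. by move=> E Es; move/eqP: E; rewrite eqseq_cat // => /andP[/eqP -> /eqP ->]. Qed.

Lemma rev_merge u v : rev (merge u v) = merge (rev v) (rev u).
Proof.
have [u1 [o [v1 [Eu Ev So ->]]]] := merge_spec u v.
have [a1 [o' [b1 [Ea Eb So' ->]]]] := merge_spec (rev v) (rev u).
rewrite ov_rev -So in So'.
have Ea' : rev v1 ++ rev o = a1 ++ o' by rewrite -Ea Ev rev_cat.
have Eb' : rev o ++ rev u1 = o' ++ b1 by rewrite -Eb Eu rev_cat.
have [E1 E2] : rev v1 = a1 /\ rev o = o'.

  have := congr1 size Ea'; rewrite !size_cat !size_rev So' => HH.
  apply: (cat_inj Ea'); rewrite size_rev; lia.
subst a1 o'.
have [_ E3] := cat_inj Eb' erefl.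
by rewrite -E3 !rev_cat catA.
Qed.

Lemma catsplit p q r s : p ++ q = r ++ s -> size p <= size r ->
  exists m, r = p ++ m /\ q = m ++ s.
Proof.
move=> E le; exists (drop (size p) r).
have Ep : take (size p) r = p.
  have H := congr1 (take (size p)) E; rewrite take_size_cat // in H.
  rewrite {2}H take_cat; case: ltnP => h //.
  have e : size p = size r by apply/eqP; rewrite eqn_leq le h.
  by rewrite e subnn take0 cats0 take_size.
split; first by rewrite -{1}(cat_take_drop (size p) r) Ep.
have : p ++ q = p ++ (drop (size p) r ++ s) by rewrite E catA -{1}Ep cat_take_drop.
by move/eqP; rewrite eqseq_cat // eqxx /= => /eqP.
Qed.

Lemma infix_mid p x s : infix x (p ++ x ++ s).
Proof. by apply/infixP; exists p, s. Qed.

Lemma ov_catl m v x : ~~ infix v x -> ov (m ++ v) x = ov v x.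
Proof.
move=> nvx; apply/eqP; rewrite eqn_leq; apply/andP; split.
  have [x1 [o [y1 [E1 E2 <-]]]] := ovP (m ++ v) x.
  case: (leqP (size v) (size o)) => h.
    have hs : size x1 <= size m by have := congr1 size E1; rewrite !size_cat; lia.
    have [m' [Em Eo]] := catsplit (esym E1) hs.
    by case/negP: nvx; rewrite E2 Eo -catA infix_mid.
  have hs : size m <= size x1 by have := congr1 size E1; rewrite !size_cat; lia.
  have [m' [Em Eo]] := catsplit E1 hs.
  exact: (ov_max Eo E2).
have [x1 [o [y1 [E1 E2 <-]]]] := ovP v x.
by apply: (ov_max (x1 := m ++ x1)) E2; rewrite E1 catA.
Qed.

Lemma ov_catr u m x : ~~ infix u x -> ov x (u ++ m) = ov x u.
Proof.
move=> nux; rewrite -ov_rev rev_cat ov_catl ?ov_rev //.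
by rewrite infix_rev.
Qed.

Lemma monge a b c d : ov a d <= ov a b -> ov c b <= ov a b ->
  ov a d + ov c b <= ov a b + ov c d.
Proof.
have [a1 [o [b1 [Ea Eb <-]]]] := ovP a b.
have [a2 [p [d1 [Ea2 Ed <-]]]] := ovP a d.
have [c1 [q [b2 [Ec Eb2 <-]]]] := ovP c b.
move=> hp hq.
case: (leqP (size p + size q) (size o)) => h; first lia.
have E1 : a1 ++ o = a2 ++ p by rewrite -Ea Ea2.
have hs1 : size a1 <= size a2 by have := congr1 size E1; rewrite !size_cat; lia.
have [o1 [Ea2' Eo]] := catsplit E1 hs1.
have E2 : q ++ b2 = o ++ b1 by rewrite -Eb Eb2.
have hs2 : size q <= size o by [].
have [o2 [Eo' Eb2']] := catsplit E2 hs2.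
have E3 : o1 ++ p = q ++ o2 by rewrite -Eo Eo'.
have hs3 : size o1 <= size q by have := congr1 size Eo; rewrite size_cat; lia.
have [r [Eq Ep]] := catsplit E3 hs3.
have : size r <= ov c d.
  apply: (ov_max (x1 := c1 ++ o1) (y1 := o2 ++ d1)).
    by rewrite Ec Eq catA.
  by rewrite Ed Ep catA.
have := congr1 size Eq; have := congr1 size Eo; rewrite !size_cat; lia.
Qed.


Lemma merge_infix u v x : infix x (merge u v) -> ~~ infix x u -> ~~ infix x v ->
  ov u v < ov u x.
Proof.
have [u1 [o [v1 [Eu Ev So ->]]]] := merge_spec u v.
case/infixP => p [s E] nxu nxv.
case: (leqP (size u1) (size p)) => h1.
  have [m [Ep Eo]] := catsplit E h1.
  by case/negP: nxv; rewrite Ev Eo infix_mid.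
have h1' : size p <= size u1 by lia.
have [m [Eu1 Ex]] := catsplit (esym E) h1'.
have m0 : size m > 0.
  by have := congr1 size Eu1; rewrite size_cat; lia.
have Ex' : x ++ s = (m ++ o) ++ v1 by rewrite Ex catA.
case: (leqP (size x) (size (m ++ o))) => h2.
  have [m2 [Emo Es]] := catsplit Ex' h2.
  by case/negP: nxu; rewrite Eu Eu1 -catA Emo infix_mid.
have h2' : size (m ++ o) <= size x by lia.
have [m3 [Ex3 _]] := catsplit (esym Ex') h2'.
have : size (m ++ o) <= ov u x.
  by apply: (ov_max (x1 := p) (y1 := m3)) => //; rewrite Eu Eu1 catA.
rewrite -So size_cat; lia.
Qed.


Lemma merge_l a b : exists v1, merge a b = a ++ v1.
Proof. by have [u1 [o [v1 [-> _ _ ->]]]] := merge_spec a b; exists v1; rewrite catA. Qed.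

Lemma merge_r a b : exists u1, merge a b = u1 ++ b.
Proof. by have [u1 [o [v1 [_ -> _ ->]]]] := merge_spec a b; exists u1. Qed.

Lemma ov_merge_l y a b : ~~ infix a y -> ov y (merge a b) = ov y a.
Proof. by have [v1 ->] := merge_l a b; apply: ov_catr. Qed.

Lemma ov_merge_r y a b : ~~ infix b y -> ov (merge a b) y = ov b y.
Proof. by have [u1 ->] := merge_r a b; apply: ov_catl. Qed.

Fixpoint W (t : seq (seq A)) : nat :=
  if t is x :: r then (if r is y :: _ then ov x y + W r else 0) else 0.

Definition J (X Y : seq (seq A)) : nat :=
  if X is x :: X' then (if Y is y :: _ then ov (last x X') y else 0) else 0.

Definition rs (t : seq (seq A)) := map rev (rev t).

Implicit Types (X Y Z : seq (seq A)).

Lemma W1 x : W [:: x] = 0. Proof. by []. Qed.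

Lemma J0l Y : J [::] Y = 0. Proof. by []. Qed.
Lemma J0r X : J X [::] = 0. Proof. by case: X. Qed.

Lemma W_cat X Y : W (X ++ Y) = W X + J X Y + W Y.
Proof.
elim: X => [|x X IH] /=; first by [].
case: X IH => [|x' X] IH /=.
  by case: Y {IH}.
by move: IH; rewrite [W ((x' :: X) ++ Y)]/= => ->; rewrite /=; lia.
Qed.

Lemma W_cons x Y : W (x :: Y) = J [:: x] Y + W Y.
Proof. by rewrite -cat1s W_cat. Qed.

Lemma W_cat_ge X Y : W X + W Y <= W (X ++ Y).
Proof. rewrite W_cat; lia. Qed.

Lemma J_cons_r X y Z : J X (y :: Z) = J X [:: y].
Proof. by case: X. Qed.

Lemma J_cat_r X Y Z : Y != [::] -> J X (Y ++ Z) = J X Y.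
Proof. by case: Y => // y Y _; rewrite cat_cons J_cons_r [RHS]J_cons_r. Qed.

Lemma J_rcons_l X y Z : J (rcons X y) Z = J [:: y] Z.
Proof. by case: X => [|x X] //=; rewrite last_rcons. Qed.

Lemma J_cat_l X Y Z : Y != [::] -> J (X ++ Y) Z = J Y Z.
Proof.
case/lastP: Y => // Y y _; by rewrite -rcons_cat !J_rcons_l.
Qed.

Lemma J11 x y : J [:: x] [:: y] = ov x y. Proof. by []. Qed.

Lemma rs_cons x X : rs (x :: X) = rs X ++ [:: rev x].
Proof. by rewrite /rs rev_cons map_rcons cats1. Qed.

Lemma rs_cat X Y : rs (X ++ Y) = rs Y ++ rs X.
Proof. by rewrite /rs rev_cat map_cat. Qed.

Lemma rs1 x : rs [:: x] = [:: rev x]. Proof. by []. Qed.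

Lemma rsK X : rs (rs X) = X.
Proof. by rewrite /rs -map_rev revK -map_comp (eq_map (@revK A)) map_id. Qed.

Lemma J_rs X Y : J (rs Y) (rs X) = J X Y.
Proof.
case/lastP: X => [|X x]; first by rewrite J0l /rs /= J0r.
case: Y => [|y Y]; first by rewrite J0r.
rewrite rs_cons J_cat_l // /rs rev_rcons /= J_cons_r J_rcons_l.
by rewrite ov_rev.
Qed.

Lemma W_rs X : W (rs X) = W X.
Proof.
elim: X => [|x X IH] //; rewrite rs_cons W_cat IH W1 W_cons addn0.
have -> : [:: rev x] = rs [:: x] by [].
by rewrite J_rs addnC.
Qed.

Lemma mem_rs X y : (y \in rs X) = (rev y \in X).
Proof.
by rewrite /rs -{1}(revK y) (mem_map (can_inj (@revK A))) mem_rev.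
Qed.

Lemma J_change_r X x x' : (forall y, y \in X -> ov y x = ov y x') ->
  J X [:: x] = J X [:: x'].
Proof. by case: X => [|z X] //= H; rewrite H // mem_last. Qed.

Lemma J_change_l Y x x' : (forall y, y \in Y -> ov x y = ov x' y) ->
  J [:: x] Y = J [:: x'] Y.
Proof. by case: Y => [|z Y] //= H; rewrite H // mem_head. Qed.

Lemma J_le_r X x k : (forall y, y \in X -> ov y x <= k) -> J X [:: x] <= k.
Proof. by case: X => [|z X] //= H; rewrite H // mem_last. Qed.

Lemma J_le_l Y x k : (forall y, y \in Y -> ov x y <= k) -> J [:: x] Y <= k.
Proof. by case: Y => [|z Y] //= H; rewrite H // mem_head. Qed.

Lemma J_monge X Y a b : J X [:: b] <= ov a b -> J [:: a] Y <= ov a b ->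
  J X [:: b] + J [:: a] Y <= ov a b + J X Y.
Proof.
case: X => [|x X]; first by rewrite !J0l; lia.
case: Y => [|y Y]; first by rewrite !J0r; lia.
rewrite /= => h1 h2; rewrite addnC; exact: monge.
Qed.


Section Core.
Variables (a b : seq A) (D : pred (seq A)).
Hypothesis Drev : forall x, D x -> D (rev x).
Hypothesis Hk : forall x y, D x -> D y -> x != y -> x != rev y -> ov x y <= ov a b.
Hypotheses (Da : D a) (Db : D b) (nab : a != b) (narb : a != rev b).

Definition good y := [&& D y, ~~ infix a y, ~~ infix a (rev y), ~~ infix b y & ~~ infix b (rev y)].

Lemma neq_of_ninf x y : ~~ infix x y -> x != y.
Proof. by apply: contra => /eqP ->; rewrite infix_refl. Qed.

Lemma neq_rev_of_ninf x y : ~~ infix x (rev y) -> x != rev y.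
Proof. exact: neq_of_ninf. Qed.

Lemma nrev_sym x y : (x != rev y) = (rev x != y).
Proof. by apply/idP/idP; apply: contra => /eqP E; [rewrite -E revK | rewrite E revK]. Qed.

Section G.
Variable y : seq A.
Hypothesis gy : good y.
Let Dy : D y. Proof. by case/and5P: gy. Qed.
Let nay : ~~ infix a y. Proof. by case/and5P: gy. Qed.
Let nary : ~~ infix a (rev y). Proof. by case/and5P: gy. Qed.
Let nby : ~~ infix b y. Proof. by case/and5P: gy. Qed.
Let nbry : ~~ infix b (rev y). Proof. by case/and5P: gy. Qed.

Lemma g_ay : ov a y <= ov a b.
Proof. by apply: Hk => //; [apply: neq_of_ninf | apply: neq_rev_of_ninf]. Qed.
Lemma g_ya : ov y a <= ov a b.
Proof.
apply: Hk => //; first by rewrite eq_sym; apply: neq_of_ninf.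
by rewrite nrev_sym eq_sym; apply: neq_rev_of_ninf.
Qed.
Lemma g_by : ov b y <= ov a b.
Proof. by apply: Hk => //; [apply: neq_of_ninf | apply: neq_rev_of_ninf]. Qed.
Lemma g_yb : ov y b <= ov a b.
Proof.
apply: Hk => //; first by rewrite eq_sym; apply: neq_of_ninf.
by rewrite nrev_sym eq_sym; apply: neq_rev_of_ninf.
Qed.
Lemma g_rby : ov (rev b) y <= ov a b.
Proof.
apply: Hk; rewrite ?Drev //.
  by rewrite -nrev_sym; apply: neq_rev_of_ninf.
by rewrite nrev_sym revK; apply: neq_of_ninf.
Qed.
Lemma g_ym : ov y (merge a b) = ov y a. Proof. exact: ov_merge_l. Qed.
Lemma g_my : ov (merge a b) y = ov b y. Proof. exact: ov_merge_r. Qed.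
End G.

Lemma good_rev y : good (rev y) = good y.
Proof.
rewrite /good revK; apply/idP/idP => /and5P[h1 h2 h3 h4 h5]; apply/and5P; split => //.
  by rewrite -[y]revK Drev.
exact: Drev.
Qed.

Let k := ov a b.

Lemma ov_ba : ov b a <= k.
Proof.
apply: Hk => //; first by rewrite eq_sym.
by rewrite nrev_sym eq_sym.
Qed.

Lemma ov_arb : ov a (rev b) <= k.
Proof. by apply: Hk; rewrite ?Drev ?revK // eq_sym. Qed.

Lemma core1 P Q R : (forall y, y \in P ++ Q ++ R -> good y) ->
  W (P ++ a :: Q ++ b :: R) <= W (P ++ merge a b :: R ++ Q) + 2 * k.
Proof.
move=> G.
have GP y : y \in P -> good y by move=> h; apply: G; rewrite mem_cat h.
have GQ y : y \in Q -> good y by move=> h; apply: G; rewrite !mem_cat h orbT.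
have GR y : y \in R -> good y by move=> h; apply: G; rewrite !mem_cat h !orbT.
have E : P ++ merge a b :: R ++ Q = (P ++ merge a b :: R) ++ Q by rewrite -catA.
rewrite E; apply: leq_trans (leq_add (W_cat_ge _ _) (leqnn _)).
rewrite !W_cat !W_cons !J_cons_r.
have -> : J P [:: merge a b] = J P [:: a] by apply: J_change_r => y /GP; apply: g_ym.
have -> : J [:: merge a b] R = J [:: b] R by apply: J_change_l => y /GR; apply: g_my.
case: (eqVneq Q [::]) => [->|Qn].
  by case: (R) => [|r R'] /=; rewrite /k; lia.
rewrite J_cat_r // W_cat J_cons_r W_cons.
have h1 : J [:: a] Q <= k by apply: J_le_l => y /GQ; apply: g_ay.
have h2 : J Q [:: b] <= k by apply: J_le_r => y /GQ; apply: g_yb.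
lia.
Qed.

Lemma core2 P Q R : (forall y, y \in P ++ Q ++ R -> good y) ->
  W (P ++ b :: Q ++ a :: R) <= W (P ++ R ++ Q ++ [:: merge a b]) + 2 * k.
Proof.
move=> G.
have GP y : y \in P -> good y by move=> h; apply: G; rewrite mem_cat h.
have GQ y : y \in Q -> good y by move=> h; apply: G; rewrite !mem_cat h orbT.
have GR y : y \in R -> good y by move=> h; apply: G; rewrite !mem_cat h !orbT.
have E : P ++ R ++ Q ++ [:: merge a b] = (P ++ R) ++ (Q ++ [:: merge a b]) by rewrite -catA.
rewrite E; apply: leq_trans (leq_add (W_cat_ge _ _) (leqnn _)).
rewrite !W_cat W1 !W_cons J_cons_r addn0.
have -> : J Q [:: merge a b] = J Q [:: a] by apply: J_change_r => y /GQ; apply: g_ym.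
have hPb : J P [:: b] <= k by apply: J_le_r => y /GP; apply: g_yb.
have haR : J [:: a] R <= k by apply: J_le_l => y /GR; apply: g_ay.
have M := J_monge hPb haR.
case: (eqVneq Q [::]) => [->|Qn].
  rewrite cat0s J_cons_r J11 W_cons J0l (_ : W [::] = 0) //; have := ov_ba; rewrite /k in M *; lia.
rewrite J_cat_r // W_cat J_cons_r W_cons.
have h1 : J [:: b] Q <= k by apply: J_le_l => y /GQ; apply: g_by.
rewrite /k in M h1 *; lia.
Qed.

Lemma core3 P Q R : (forall y, y \in P ++ Q ++ R -> good y) ->
  W (P ++ a :: Q ++ rev b :: R) <= W (P ++ merge a b :: rs Q ++ R) + 2 * k.
Proof.
move=> G.
have GP y : y \in P -> good y by move=> h; apply: G; rewrite mem_cat h.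
have GQ y : y \in Q -> good y by move=> h; apply: G; rewrite !mem_cat h orbT.
have GR y : y \in R -> good y by move=> h; apply: G; rewrite !mem_cat h !orbT.
rewrite !W_cat !W_cons !J_cons_r.
have -> : J P [:: merge a b] = J P [:: a] by apply: J_change_r => y /GP; apply: g_ym.
have hWr := W_cat_ge (rs Q) R; rewrite W_rs in hWr.
have hrR : J [:: rev b] R <= k by apply: J_le_l => y /GR; apply: g_rby.
case: (eqVneq Q [::]) => [->|Qn].
  rewrite cat0s J_cons_r J11 W_cons (_ : rs [::] = [::]) // cat0s; have := ov_arb; rewrite /k in hrR *; lia.
have -> : J [:: merge a b] (rs Q ++ R) = J Q [:: rev b].
  rewrite J_cat_r; last by rewrite -size_eq0 size_map size_rev size_eq0.
  rewrite (@J_change_l _ _ b); last first.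
    by move=> y; rewrite mem_rs => /GQ; rewrite good_rev => gy; apply: g_my.
  by rewrite -[in LHS](revK b) -rs1 J_rs.
rewrite J_cat_r // [W (Q ++ _)]W_cat W_cons J_cons_r.
have h1 : J [:: a] Q <= k by apply: J_le_l => y /GQ; apply: g_ay.
rewrite /k in hrR h1 *; lia.
Qed.

End Core.

End A.

Section B.
Variable A : eqType.
Implicit Types (x y z u v a b c s : seq A) (X Y Z P Q R S : seq (seq A)).

Definition rel2 t s : bool := (t == s) || (t == rev s).

Lemma rel2_rev t s : rel2 (rev t) s = rel2 t s.
Proof.
rewrite /rel2; apply/idP/idP => /orP[] /eqP E.
- by apply/orP; right; rewrite -E revK.
- by apply/orP; left; rewrite -[t]revK E revK.
- by apply/orP; right; rewrite E.
- by apply/orP; left; rewrite E revK.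
Qed.

Lemma all2_size (r : rel (seq A)) X Y : all2 r X Y -> size X = size Y.
Proof. by rewrite all2E => /andP[/eqP]. Qed.

Lemma all2_cat (r : rel (seq A)) X1 X2 Y1 Y2 :
  all2 r X1 Y1 -> all2 r X2 Y2 -> all2 r (X1 ++ X2) (Y1 ++ Y2).
Proof.
elim: X1 Y1 => [|x X IH] [|y Y] //= /andP[h1 h2] h3.
by rewrite h1 IH.
Qed.

Lemma all2_split (r : rel (seq A)) X Y1 y Y2 : all2 r X (Y1 ++ y :: Y2) ->
  exists X1 x X2, [/\ X = X1 ++ x :: X2, all2 r X1 Y1, r x y & all2 r X2 Y2].
Proof.
elim: Y1 X => [|y' Y IH] [|x X] //=.
  by case/andP=> h1 h2; exists [::], x, X.
case/andP=> h1 /IH [X1 [x' [X2 [-> h2 h3 h4]]]].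
by exists (x :: X1), x', X2; rewrite /= h1 h2.
Qed.

Lemma all2_rs X Y : all2 rel2 X Y -> all2 rel2 (rs X) (rev Y).
Proof.
elim: X Y => [|x X IH] [|y Y] //= /andP[h1 h2].
rewrite rs_cons rev_cons -cats1; apply: all2_cat; first exact: IH.
by rewrite /= rel2_rev h1.
Qed.

Lemma all2_mem (r : rel (seq A)) X Y z : all2 r X Y -> z \in X -> exists2 s, s \in Y & r z s.
Proof.
elim: X Y => [|x X IH] [|y Y] //= /andP[h1 h2]; rewrite inE => /orP[/eqP->|zX].
  by exists y; rewrite ?mem_head.
by have [s sY hs] := IH _ h2 zX; exists s; rewrite // inE sY orbT.
Qed.

Lemma tilde_rev S x : (rev x \in tilde S) = (x \in tilde S).
Proof.
rewrite /tilde !mem_cat; apply/orP/orP => -[h|h].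
- by right; rewrite -[x]revK map_f.
- by case/mapP: h => y yS /(congr1 rev); rewrite !revK => ->; left.
- by right; rewrite map_f.
- by case/mapP: h => y yS ->; left; rewrite revK.
Qed.

Lemma tilde_rel2 S x s : s \in S -> rel2 x s -> x \in tilde S.
Proof.
by move=> sS /orP[]/eqP->; rewrite /tilde mem_cat ?sS // map_f ?orbT.
Qed.

Lemma rel2_tilde S x : x \in tilde S -> exists2 s, s \in S & rel2 x s.
Proof.
rewrite /tilde mem_cat => /orP[h|/mapP[s sS ->]].
  by exists x; rewrite // /rel2 eqxx.
by exists s; rewrite // /rel2 eqxx orbT.
Qed.

Lemma nf S s1 s2 c z : rff S -> s1 \in S -> s2 \in S -> s1 != s2 ->
  rel2 c s1 -> rel2 z s2 -> ~~ infix c z.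
Proof.
move=> H h1 h2 ne /orP[]/eqP-> /orP[]/eqP->; have /andP[n1 n2] := H _ _ h1 h2 ne => //.
- by rewrite infix_revLR.
- by rewrite infix_rev.
Qed.


Lemma rel2_same x u s : rel2 x s -> rel2 u s -> x = u \/ x = rev u.
Proof.
move=> /orP[]/eqP-> /orP[]/eqP->; rewrite ?revK; by [left|right].
Qed.

Lemma permA1 (m : seq A) P0 Q0 R0 : perm_eq (P0 ++ m :: R0 ++ Q0) (m :: P0 ++ Q0 ++ R0).
Proof. by apply/permP => p; rewrite /= !count_cat /= ?count_cat; lia. Qed.
Lemma permA2 (m : seq A) P0 Q0 R0 : perm_eq (P0 ++ m :: rev Q0 ++ R0) (m :: P0 ++ Q0 ++ R0).
Proof. by apply/permP => p; rewrite /= !count_cat /= ?count_cat count_rev; lia. Qed.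
Lemma permA3 (m : seq A) P0 Q0 R0 : perm_eq (rev R0 ++ m :: Q0 ++ rev P0) (m :: P0 ++ Q0 ++ R0).
Proof. by apply/permP => p; rewrite /= !count_cat /= ?count_cat !count_rev; lia. Qed.
Lemma permA4 (m : seq A) P0 Q0 R0 : perm_eq (P0 ++ R0 ++ Q0 ++ [:: m]) (m :: P0 ++ Q0 ++ R0).
Proof. by apply/permP => p; rewrite /= !count_cat /= ?count_cat /=; lia. Qed.

Section Step.
Variables (S : seq (seq A)) (u v : seq A).
Hypothesis HS : rff S.
Hypothesis adm : admissible S u v.
Hypothesis Hmax : forall u' v', admissible S u' v' -> ov u' v' <= ov u v.

Let D : pred (seq A) := [pred x | x \in tilde S].
Let mu := merge u v.

Definition far z := (z \in tilde S) && all (fun c => ~~ infix c z) [:: u; rev u; v; rev v].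

Lemma far_rev z : far (rev z) = far z.
Proof.
rewrite /far tilde_rev /= !infix_revLR !revK.
by apply/idP/idP => /and5P[-> h1 h2 h3 h4]; rewrite h1 h2 h3 h4 /=.
Qed.

Let Drev : forall x, D x -> D (rev x).
Proof. by move=> x; rewrite /D /= tilde_rev. Qed.

Lemma adm_u : u \in tilde S. Proof. by case: adm. Qed.
Lemma adm_v : v \in tilde S. Proof. by case: adm. Qed.
Lemma adm_uv : u != v. Proof. by case: adm. Qed.
Lemma adm_urv : u != rev v. Proof. by case: adm. Qed.

Let Hk1 : forall x y, D x -> D y -> x != y -> x != rev y -> ov x y <= ov u v.
Proof. by move=> x y h1 h2 h3 h4; apply: Hmax; split. Qed.

Let Hk2 : forall x y, D x -> D y -> x != y -> x != rev y -> ov x y <= ov (rev v) (rev u).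
Proof. by move=> x y h1 h2 h3 h4; rewrite ov_rev; apply: Hmax; split. Qed.

Lemma good_uv z : far z -> good u v D z.
Proof.
case/andP=> h /= /and5P[h1 h2 h3 h4 _]; rewrite /good; apply/and5P; split => //;
  by rewrite -?infix_revLR.
Qed.

Lemma good_vu z : far z -> good (rev v) (rev u) D z.
Proof.
case/andP=> h /= /and5P[h1 h2 h3 h4 _]; rewrite /good; apply/and5P; split => //;
  by rewrite ?infix_revLR ?revK.
Qed.

Let Dvr : D (rev v). Proof. by rewrite /D /= tilde_rev adm_v. Qed.
Let Dur : D (rev u). Proof. by rewrite /D /= tilde_rev adm_u. Qed.
Let nvu : rev v != rev u.
Proof. by apply: contra adm_uv => /eqP/(congr1 rev); rewrite !revK => ->. Qed.
Let nvuu : rev v != rev (rev u).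
Proof. by rewrite revK eq_sym adm_urv. Qed.

Lemma ordered P Q R P0 Q0 R0 x y su sv :
  rel2 u su -> rel2 v sv -> rel2 x su -> rel2 y sv ->
  all2 rel2 P P0 -> all2 rel2 Q Q0 -> all2 rel2 R R0 ->
  (forall z, z \in P ++ Q ++ R -> far z) ->
  exists T' S0', [/\ all2 rel2 T' S0', perm_eq S0' (mu :: P0 ++ Q0 ++ R0) &
    W (P ++ x :: Q ++ y :: R) <= W T' + 2 * ov u v].
Proof.
move=> ru rv rx ry aP aQ aR F.
have rmu : rel2 mu mu by rewrite /rel2 eqxx.
have rmu' : rel2 (rev mu) mu by rewrite rel2_rev.
have [->|->] := rel2_same rx ru; have [->|->] := rel2_same ry rv.
- exists (P ++ mu :: R ++ Q), (P0 ++ mu :: R0 ++ Q0); split.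
  + by apply: all2_cat => //=; rewrite rmu all2_cat.
  + exact: permA1.
  + apply: (core1 Hk1 adm_u adm_v adm_uv adm_urv).
    by move=> z /F; apply: good_uv.
- exists (P ++ mu :: rs Q ++ R), (P0 ++ mu :: rev Q0 ++ R0); split.
  + by apply: all2_cat => //=; rewrite rmu all2_cat // all2_rs.
  + exact: permA2.
  + apply: (core3 Drev Hk1 adm_u adm_v adm_uv adm_urv).
    by move=> z /F; apply: good_uv.
- exists (rs R ++ rev mu :: Q ++ rs P), (rev R0 ++ mu :: Q0 ++ rev P0); split.
  + by apply: all2_cat; rewrite ?all2_rs //= rmu' all2_cat // all2_rs.
  + exact: permA3.
  + have E : rs (P ++ rev u :: Q ++ v :: R) = rs R ++ rev v :: rs Q ++ rev (rev u) :: rs P.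
      by rewrite rs_cat rs_cons rs_cat rs_cons -!catA.
    rewrite -W_rs E.
    have -> : rev mu = merge (rev v) (rev u) by rewrite rev_merge.
    rewrite -(ov_rev u v).
    have := core3 Drev Hk2 Dvr Dur nvu nvuu (P := rs R) (Q := rs Q) (R := rs P).
    rewrite rsK; apply.
    move=> z; rewrite !mem_cat !mem_rs => /or3P[] h.
    * by apply: good_vu; rewrite -far_rev; apply: F; rewrite !mem_cat h ?orbT.
    * by apply: good_vu; rewrite -far_rev; apply: F; rewrite !mem_cat h ?orbT.
    * by apply: good_vu; rewrite -far_rev; apply: F; rewrite !mem_cat h ?orbT.
- exists (P ++ R ++ Q ++ [:: rev mu]), (P0 ++ R0 ++ Q0 ++ [:: mu]); split.
  + by rewrite !all2_cat //= rmu'.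
  + exact: permA4.
  + have -> : rev mu = merge (rev v) (rev u) by rewrite rev_merge.
    rewrite -(ov_rev u v).
    apply: (core2 Hk2 Dvr Dur nvu nvuu).
    by move=> z /F; apply: good_vu.
Qed.

End Step.

End B.
Arguments rel2 {A}.

Section C.
Variable A : eqType.
Implicit Types (x y z u v a b c s : seq A) (X Y Z P Q R S : seq (seq A)).

Lemma total_perm X Y : perm_eq X Y -> total_length X = total_length Y.
Proof. by move=> h; rewrite /total_length (perm_big _ h). Qed.

Lemma total_cons x X : total_length (x :: X) = size x + total_length X.
Proof. by rewrite /total_length big_cons. Qed.

Lemma rel2_size t s : rel2 t s -> size t = size s.
Proof. by case/orP => /eqP ->; rewrite ?size_rev. Qed.

Lemma rel2_refl s : rel2 s s. Proof. by rewrite /rel2 eqxx. Qed.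

Lemma rel2_sym t s : rel2 t s -> rel2 s t.
Proof. by case/orP => /eqP ->; rewrite /rel2 ?revK eqxx ?orbT. Qed.

Lemma rel2_neq S s1 s2 c : rff S -> s1 \in S -> s2 \in S -> s1 != s2 -> rel2 c s1 -> c != s2.
Proof.
move=> H h1 h2 ne r; apply: (neq_of_ninf (y := s2)).
exact: (nf H h1 h2 ne r (rel2_refl s2)).
Qed.

Lemma arith1 (a b k t : nat) : k <= b -> a + b - k + t + k = a + (b + t).
Proof. lia. Qed.

Lemma finish S S' u v su sv Srest :
  uniq S -> uniq S' -> rff S -> admissible S u v ->
  (forall u' v', admissible S u' v' -> ov u' v' <= ov u v) ->
  S' =i [pred z | ((z \in S) || (z == merge u v)) && (z \notin [:: u; v; rev u; rev v])] ->
  rel2 u su -> rel2 v sv -> perm_eq S (su :: sv :: Srest) ->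
  [/\ perm_eq (merge u v :: Srest) S', rff S' & total_length S' + ov u v = total_length S].
Proof.
move=> uS uS' HS adm Hmax ES' ru rv pS.
set mu := merge u v.
have uS0 : uniq (su :: sv :: Srest) by rewrite -(perm_uniq pS).
move: (uS0) => /= /andP[]; rewrite inE negb_or => /andP[nsv nsuR] /andP[nsvR uR].
have memS z : z \in S = (z \in su :: sv :: Srest) by rewrite (perm_mem pS).
have suS : su \in S by rewrite memS mem_head.
have svS : sv \in S by rewrite memS !inE eqxx orbT.
have RS z : z \in Srest -> z \in S by move=> h; rewrite memS !inE h !orbT.
have zsu z : z \in Srest -> z != su by move=> h; apply: contraNneq nsuR => <-.
have zsv z : z \in Srest -> z != sv by move=> h; apply: contraNneq nsvR => <-.
have [uT vT uv urv] := adm.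
have [v1 Emu] := merge_l u v.
have [u1 Emu'] := merge_r u v.
have uinf : infix u mu by rewrite /mu Emu prefix_infix.
have vinf : infix v mu by rewrite /mu Emu' suffix_infix.
have ru' : rel2 (rev u) su by rewrite rel2_rev.
have rv' : rel2 (rev v) sv by rewrite rel2_rev.
have nf1 c z s : z \in Srest -> rel2 c s -> (s == su) || (s == sv) -> ~~ infix c z.
  move=> zR rc /orP[]/eqP Es; rewrite Es in rc.
    by apply: (nf HS suS (RS _ zR) _ rc (rel2_refl z)); rewrite eq_sym zsu.
  by apply: (nf HS svS (RS _ zR) _ rc (rel2_refl z)); rewrite eq_sym zsv.
have nf1r c z s : z \in Srest -> rel2 c s -> (s == su) || (s == sv) -> ~~ infix c (rev z).
  move=> zR rc /orP[]/eqP Es; rewrite Es in rc.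
    by apply: (nf HS suS (RS _ zR) _ rc); rewrite ?rel2_rev ?rel2_refl // eq_sym zsu.
  by apply: (nf HS svS (RS _ zR) _ rc); rewrite ?rel2_rev ?rel2_refl // eq_sym zsv.
have suv : su != sv by [].
have svu : sv != su by rewrite eq_sym.
have mu_notR : mu \notin Srest.
  by apply/negP => h; have := nf1 u mu su h ru; rewrite eqxx uinf => /(_ isT).
have mu_not4 : mu \notin [:: u; v; rev u; rev v].
  rewrite !inE; apply/negP; case/or4P => /eqP E.
  - by have := nf HS svS suS svu rv ru; rewrite -E vinf.
  - by have := nf HS suS svS suv ru rv; rewrite -E uinf.
  - by have := nf HS svS suS svu rv ru'; rewrite -E vinf.
  - by have := nf HS suS svS suv ru rv'; rewrite -E uinf.
have zS_not4 z : z \in Srest -> z \notin [:: u; v; rev u; rev v].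
  move=> zR; rewrite !inE; apply/negP; case/or4P => /eqP E.
  - by have := nf1 u z su zR ru; rewrite eqxx E infix_refl => /(_ isT).
  - by have := nf1 v z sv zR rv; rewrite eqxx orbT E infix_refl => /(_ isT).
  - by have := nf1 (rev u) z su zR ru'; rewrite eqxx E infix_refl => /(_ isT).
  - by have := nf1 (rev v) z sv zR rv'; rewrite eqxx orbT E infix_refl => /(_ isT).
have su4 : su \in [:: u; v; rev u; rev v].
  by case/orP: ru => /eqP ->; rewrite !inE ?revK eqxx ?orbT.
have sv4 : sv \in [:: u; v; rev u; rev v].
  by case/orP: rv => /eqP ->; rewrite !inE ?revK eqxx ?orbT.
have pS' : perm_eq (mu :: Srest) S'.
  apply: uniq_perm => //; first by rewrite /= mu_notR uR.
  move=> z; rewrite ES' inE /=; apply/idP/idP.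
    rewrite inE => /orP[/eqP ->|zR]; first by rewrite eqxx orbT mu_not4.
    by rewrite RS // zS_not4.
  case/andP => /orP[zS|/eqP ->] n4; last by rewrite eqxx.
  apply/orP; right; move: zS; rewrite memS !inE => /or3P[/eqP E|/eqP E|] //.
    by move: n4; rewrite E su4.
  by move: n4; rewrite E sv4.
split => //.
- move=> x y; rewrite -!(perm_mem pS') !inE => hx hy nxy.
  case/orP: hx => [/eqP Ex|xR]; case/orP: hy => [/eqP Ey|yR].
  + by rewrite Ex Ey eqxx in nxy.
  + rewrite Ex; apply/andP; split; apply/negP => h.
      by have := nf1 u y su yR ru; rewrite eqxx (infix_trans uinf h) => /(_ isT).
    by have := nf1r u y su yR ru; rewrite eqxx (infix_trans uinf h) => /(_ isT).
  + rewrite Ey; have xS := RS _ xR.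
    have nxu : ~~ infix x u.
      by apply: (nf HS xS suS (zsu _ xR) (rel2_refl x) ru).
    have nxv : ~~ infix x v.
      by apply: (nf HS xS svS (zsv _ xR) (rel2_refl x) rv).
    have nxur : ~~ infix x (rev u).
      by apply: (nf HS xS suS (zsu _ xR) (rel2_refl x) ru').
    have nxvr : ~~ infix x (rev v).
      by apply: (nf HS xS svS (zsv _ xR) (rel2_refl x) rv').
    have xT : x \in tilde S by apply: (tilde_rel2 xS (rel2_refl x)).
    have rxx : rel2 (rev x) x by rewrite rel2_rev rel2_refl.
    apply/andP; split; apply/negP => h.
      have := merge_infix h nxu nxv; rewrite ltnNge Hmax //; split => //.
        by apply: neq_of_ninf; apply: (nf HS suS xS _ ru (rel2_refl x)); rewrite eq_sym zsu.
      by apply: neq_of_ninf; apply: (nf HS suS xS _ ru rxx); rewrite eq_sym zsu.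
    rewrite /mu rev_merge in h.
    have := merge_infix h nxvr nxur; rewrite ov_rev ltnNge Hmax //; split => //.
    * by rewrite tilde_rev.
    * by apply: neq_of_ninf; apply: (nf HS svS xS _ rv' (rel2_refl x)); rewrite eq_sym zsv.
    * by apply: neq_of_ninf; rewrite infix_rev; apply: (nf HS svS xS _ rv (rel2_refl x)); rewrite eq_sym zsv.
  + by apply: HS; rewrite ?RS.
- rewrite -(total_perm pS') (total_perm pS) !total_cons /mu size_mg.
  rewrite -(rel2_size ru) -(rel2_size rv).
  by apply: arith1; apply: ov_le_r.
Qed.


Lemma arith2 (w w' k a b : nat) : w <= w' + 2 * k -> a + k = b -> w + 2 * a <= w' + 2 * b.
Proof. lia. Qed.

Lemma permB1 (su sv : seq A) S1 S21 S22 :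
  perm_eq (S1 ++ su :: S21 ++ sv :: S22) (su :: sv :: (S1 ++ S21 ++ S22)).
Proof. by apply/permP => p; rewrite /= !count_cat /= ?count_cat /=; lia. Qed.

Lemma permB2 (su sv : seq A) S11 S12 S2 :
  perm_eq ((S11 ++ sv :: S12) ++ su :: S2) (su :: sv :: (rev S2 ++ rev S12 ++ rev S11)).
Proof. by apply/permP => p; rewrite /= !count_cat /= ?count_cat /= !count_rev; lia. Qed.

Lemma farF S u v su sv (Srest : seq (seq A)) Z : rff S -> su \in S -> sv \in S -> rel2 u su -> rel2 v sv ->
  (forall s, s \in Srest -> [/\ s \in S, s != su & s != sv]) ->
  all2 rel2 Z Srest -> forall z, z \in Z -> far S u v z.
Proof.
move=> HS suS svS ru rv HR aZ z zZ.
have [s sR rz] := all2_mem aZ zZ.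
have [sS nsu nsv] := HR _ sR.
rewrite /far (tilde_rel2 sS rz) /=.
have ru' : rel2 (rev u) su by rewrite rel2_rev.
have rv' : rel2 (rev v) sv by rewrite rel2_rev.
rewrite (nf HS suS sS _ ru rz) ?(nf HS suS sS _ ru' rz) ?(nf HS svS sS _ rv rz)
  ?(nf HS svS sS _ rv' rz) // eq_sym ?nsu ?nsv //.
Qed.

Lemma mem_split (x : seq A) X : x \in X -> exists X1 X2, X = X1 ++ x :: X2.
Proof. by case/splitPr => X1 X2; exists X1, X2. Qed.

Lemma step_tour S S' T S0 : uniq S -> rff S -> greedy_step S S' ->
  all2 rel2 T S0 -> perm_eq S0 S ->
  exists T' S0', [/\ all2 rel2 T' S0', perm_eq S0' S', rff S' &
    W T + 2 * total_length S' <= W T' + 2 * total_length S].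
Proof.
move=> uS HS [u [v [adm Hmax uS' ES']]] aT pS0.
have [uT vT uv urv] := adm.
have [su suS ru] := rel2_tilde uT.
have [sv svS rv] := rel2_tilde vT.
have suv : su != sv.
  apply/negP => /eqP E; rewrite -E in rv.
  by case: (rel2_same ru rv) => /eqP; rewrite ?(negbTE uv) ?(negbTE urv).
have uS0 : uniq S0 by rewrite (perm_uniq pS0).
have suS0 : su \in S0 by rewrite (perm_mem pS0).
have svS0 : sv \in S0 by rewrite (perm_mem pS0).
have key : forall Srest, perm_eq S0 (su :: sv :: Srest) ->
    forall T1 S1, all2 rel2 T1 S1 -> perm_eq S1 (merge u v :: Srest) ->
    W T <= W T1 + 2 * ov u v ->
    exists T' S0', [/\ all2 rel2 T' S0', perm_eq S0' S', rff S' &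
      W T + 2 * total_length S' <= W T' + 2 * total_length S].
  move=> Srest pR T1 S1 a1 p1 hW.
  have pS : perm_eq S (su :: sv :: Srest) by apply: perm_trans pR; rewrite perm_sym.
  have [pS' HS' tot] := finish uS uS' HS adm Hmax ES' ru rv pS.
  exists T1, S1; split => //; first exact: perm_trans p1 pS'.
  exact: arith2 hW tot.
have HR : forall Srest, perm_eq S0 (su :: sv :: Srest) ->
    forall s, s \in Srest -> [/\ s \in S, s != su & s != sv].
  move=> Srest pR s sR.
  have : uniq (su :: sv :: Srest) by rewrite -(perm_uniq pR).
  rewrite /= inE negb_or => /andP[/andP[_ n1] /andP[n2 _]].
  split.
  - by rewrite -(perm_mem pS0) (perm_mem pR) !inE sR !orbT.
  - by apply: contraNneq n1 => <-.
  - by apply: contraNneq n2 => <-.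
have [S1 [S2 ES0]] := mem_split suS0.
rewrite ES0 in aT uS0 svS0.
have [P [x [T2 [ET aP rx aT2]]]] := all2_split aT.
rewrite mem_cat inE eq_sym (negbTE suv) /= in svS0.
case/orP: svS0 => [svS1|svS2].
  have [S11 [S12 ES1]] := mem_split svS1.
  rewrite ES1 in aP.
  have [P1 [y [P2 [EP aP1 ry aP2]]]] := all2_split aP.
  have pR := permB2 su sv S11 S12 S2.
  rewrite -ES1 -ES0 in pR.
  have a3 := all2_cat (all2_rs aT2) (all2_cat (all2_rs aP2) (all2_rs aP1)).
  have F := farF HS suS svS ru rv (HR _ pR) a3.
  have rx' : rel2 (rev x) su by rewrite rel2_rev.
  have ry' : rel2 (rev y) sv by rewrite rel2_rev.
  have [T1 [S1' [a1 p1 hW]]] :=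
    ordered adm Hmax ru rv rx' ry' (all2_rs aT2) (all2_rs aP2) (all2_rs aP1) F.
  apply: (key _ pR T1 S1') => //.
  rewrite -W_rs ET EP.
  have -> : rs ((P1 ++ y :: P2) ++ x :: T2) = rs T2 ++ rev x :: rs P2 ++ rev y :: rs P1.
    by rewrite rs_cat rs_cons rs_cat rs_cons -!catA.
  exact: hW.
have [S21 [S22 ES2]] := mem_split svS2.
rewrite ES2 in aT2.
have [Q [y [R [ET2 aQ ry aR]]]] := all2_split aT2.
have pR := permB1 su sv S1 S21 S22.
rewrite -ES2 -ES0 in pR.
have F := farF HS suS svS ru rv (HR _ pR) (all2_cat aP (all2_cat aQ aR)).
have [T1 [S1' [a1 p1 hW]]] := ordered adm Hmax ru rv rx ry aP aQ aR F.
apply: (key _ pR T1 S1') => //.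
by rewrite ET ET2.
Qed.


End C.

Section D.
Variable A : eqType.
Implicit Types (x y z u v a b c s t w : seq A) (X Y Z P Q R S : seq (seq A)).

Lemma arith3 (a b c d e : nat) : a + 2 * c <= b + 2 * d -> b + 2 * e <= 2 * c -> a + 2 * e <= 2 * d.
Proof. lia. Qed.

Lemma loop_inv S w : greedy_loop S w -> uniq S -> rff S ->
  forall T S0, all2 rel2 T S0 -> perm_eq S0 S -> W T + 2 * size w <= 2 * total_length S.
Proof.
elim => [w0 | S1 S2 w0 _ st _ IH] uS HS T S0 aT pS.
  have E : S0 = [:: w0] by apply: perm_small_eq.
  rewrite E in aT; case: T aT => [|t [|t' T]] //=; last by rewrite andbF.
  by rewrite total_cons /total_length big_nil addn0.
have uS2 : uniq S2 by case: st => u [v [_ _ ? _]].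
have [T' [S0' [a' p' HS' hW]]] := step_tour uS HS st aT pS.
exact: arith3 hW (IH uS2 HS' T' S0' a' p').
Qed.

Lemma mrff_id S S' : rff S -> mrff S S' -> S' = S.
Proof.
move=> HS H; move: HS; case: H => [S0 _ //| S0 S1 S2 [x [[xS [y [yS nyx hinf]]] _]] _] HS.
have nxy : x != y by rewrite eq_sym.
have /andP[n1 n2] := HS x y xS yS nxy.
by move: hinf; rewrite (negbTE n1) (negbTE n2).
Qed.

Definition occ t z i := (i + size t <= size z) && (take (size t) (drop i z) == t).

Lemma infix_occ t z : infix t z -> exists i, occ t z i.
Proof.
case/infixP => p [s ->]; exists (size p).
rewrite /occ drop_size_cat // take_size_cat // eqxx !size_cat andbT; lia.
Qed.

Lemma infix_take_drop n d s : infix (take n (drop d s)) s.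
Proof.
apply: (infix_trans (prefixW (prefix_take _ _))).
exact: suffixW (suffix_drop _ _).
Qed.

Lemma occ_overlap t0 t1 z m p : occ t0 z m -> occ t1 z p -> m <= p -> ~~ infix t1 t0 ->
  size t0 + m <= ov t0 t1 + p.
Proof.
case/andP=> h0 /eqP E0 /andP[h1 /eqP E1] mp nf.
case: (leqP (m + size t0) p) => hle; first lia.
set d := p - m.
set L := m + size t0 - p.
have Ld : size t0 = L + d by rewrite /L /d; lia.
have Dt0 : drop d t0 = take L (drop p z).
  rewrite -E0 Ld -take_drop drop_drop.
  by have -> : d + m = p by rewrite /d; lia.
case: (leqP (p + size t1) (m + size t0)) => h2.
  case/negP: nf; rewrite -E1.
  have -> : take (size t1) (drop p z) = take (size t1) (drop d t0).
    by rewrite Dt0 take_takel // /L; lia.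
  exact: infix_take_drop.
have hL : L <= size t1 by rewrite /L; lia.
have : size (drop d t0) <= ov t0 t1.
  apply: (ov_max (x1 := take d t0) (y1 := drop L t1)); first by rewrite cat_take_drop.
  by rewrite Dt0 -[take L (drop p z)](take_takel _ hL) E1 cat_take_drop.
rewrite size_drop /d /L; lia.
Qed.

End D.

Section E.
Variable A : eqType.
Implicit Types (x y u v a b c s t w : seq A) (X Y Z P Q R S : seq (seq A)).

Lemma rff_sub S S' : rff S -> {subset S' <= S} -> rff S'.
Proof. by move=> H sub x y hx hy; apply: H; apply: sub. Qed.

Lemma arith4 (s0 t0 m p1 o W1 tS' z : nat) : s0 = t0 -> t0 + m <= o + p1 ->
  tS' + p1 <= W1 + z -> s0 + tS' + m <= o + W1 + z.
Proof. lia. Qed.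

Lemma init_tour (z : seq A) n : forall S q, size S = n -> S != [::] -> uniq S -> rff S ->
  (forall s, s \in S -> exists i, q <= i /\ (occ s z i || occ (rev s) z i)) ->
  exists t T S0 p, [/\ all2 rel2 (t :: T) S0, perm_eq S0 S, q <= p, occ t z p &
    total_length S + p <= W (t :: T) + size z].
Proof.
elim: n => [|n IH] S q hS nS uS HS occS; first by move: hS nS; case: (S).
have exP : exists i, (q <= i) && has (fun s => occ s z i || occ (rev s) z i) S.
  move: nS occS; case: (S) => // s S0 _ occS.
  have [i [qi oi]] := occS s (mem_head _ _).
  by exists i; rewrite qi /= oi.
case: (ex_minnP exP) => m /andP[qm /hasP[s0 s0S os0]] minm.
set t0 := if occ s0 z m then s0 else rev s0.
have rt0 : rel2 t0 s0 by rewrite /t0; case: ifP => _; rewrite ?rel2_rev rel2_refl.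
have ot0 : occ t0 z m by rewrite /t0; case: ifP => // h; rewrite h /= in os0.
have pS := perm_to_rem s0S.
set S' := rem s0 S in pS.
have uS' : uniq S' by rewrite /S' rem_uniq.
have s0S' : s0 \notin S' by rewrite /S' mem_rem_uniqF.
have subS' : {subset S' <= S} by move=> x; rewrite (perm_mem pS) inE => ->; rewrite orbT.
case: (eqVneq S' [::]) => [E|nS'].
  exists t0, [::], [:: s0], m; split => //.
  - by rewrite /= rt0.
  - by rewrite perm_sym -E.
  rewrite (total_perm pS) E total_cons /total_length big_nil /= addn0 -(rel2_size rt0).
  by case/andP: ot0; rewrite addnC.
have hS' : size S' = n by have := perm_size pS; rewrite hS /= => -[].
have occS' : forall s, s \in S' -> exists i, m <= i /\ (occ s z i || occ (rev s) z i).
  move=> s sS'; have [i [qi oi]] := occS s (subS' _ sS').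
  exists i; split => //; apply: minm; rewrite qi /=; apply/hasP; exists s => //.
  exact: subS'.
have [t1 [T1 [S1 [p1 [a1 p1S mp1 ot1 tot1]]]]] :=
  IH S' m hS' nS' uS' (rff_sub HS subS') occS'.
exists t0, (t1 :: T1), (s0 :: S1), m; split => //.
- by rewrite /= rt0.
- have h : perm_eq (s0 :: S1) (s0 :: S') by rewrite perm_cons.
  by rewrite (permPl h) perm_sym.
case: S1 a1 p1S => [|s1 S1] //= /andP[rt1 a1] p1S.
have s1S' : s1 \in S' by rewrite -(perm_mem p1S) mem_head.
have ns : s1 != s0 by apply: contraNneq s0S' => <-.
have nf1 := nf HS (subS' _ s1S') s0S ns rt1 rt0.
have hov := occ_overlap ot0 ot1 mp1 nf1.
rewrite (total_perm pS) total_cons.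
exact: arith4 (esym (rel2_size rt0)) hov tot1.
Qed.

End E.

Unset Implicit Arguments.
Lemma arith5 (n k p Wt w : nat) : (n + p <= Wt + k)%N -> (Wt + 2 * w <= 2 * n)%N ->
  (2 * w <= n + k)%N.
Proof. lia. Qed.

Import Order.TTheory GRing.Theory Num.Theory.
Local Open Scope ring_scope.

Theorem theorem2 (T : eqType) (S : seq (seq T)) (kmin : nat) (w : seq T) :
  uniq S -> S != [::] -> rff S -> is_kmin S kmin -> greedyR_output S w ->
  (1 / 2 : rat) * ((total_length S)%:R - kmin%:R)
    <= (total_length S)%:R - (size w)%:R.
Proof.
move=> uS nS HS [[ws [sup sz]] _] [S0 [mr gl]].
have E0 := mrff_id HS mr; rewrite E0 in gl.
have occS : forall s, s \in S -> exists i, (0 <= i)%N /\ (occ s ws i || occ (rev s) ws i).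
  move=> s sS; case/orP: (sup s sS) => /infix_occ [i oi]; exists i; by rewrite oi ?orbT.
have [t [T0 [S1 [p [a1 pS1 _ _ tot]]]]] := init_tour erefl nS uS HS occS.
have lp := loop_inv gl uS HS a1 pS1.
rewrite sz in tot.
have key := @arith5 _ _ _ _ _ tot lp.
have : ((2 * size w)%:R <= (total_length S + kmin)%:R :> rat) by rewrite ler_nat.
rewrite natrD natrM => h.
lra.
Qed.
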